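(* Let $H=(v_1,\dots,v_6)$ be an embedded equilateral hexagon in standard position whose action-angle coordinates $(d_1,d_2,d_3,\theta_1,\theta_2,\theta_3)$ for the $T_{135}$ triangulation are defined, and let $d=\sqrt{2d_1^2d_2^2+2d_1^2d_3^2+2d_2^2d_3^2-d_1^4-d_2^4-d_3^4}$. If $J(H)=(-1,1)$, then $f_i<0$, $g_i>0$ and $h_i>0$ for all $i\in\{1,2,3\}$, where \begin{align*} f_1= & d_2\sqrt{4-d_2^2}\sin\theta_2\big(d_3d-(d_1^2-d_2^2+d_3^2)\sqrt{4-d_3^2}\cos\theta_3\big)- d_3\sqrt{4-d_3^2}\sin\theta_3\big(d_2d-(d_1^2+d_2^2-d_3^2)\sqrt{4-d_2^2}\cos\theta_2\big),\\ g_1= & \sqrt{4-d_2^2}\Big(\tfrac{-d_1^2+d_2^2+d_3^2}{2d_2 d_3}\cos\theta_2\sin\theta_3+\sin\theta_2\cos\theta_3\Big)-\tfrac{d\sin\theta_3}{2d_3},\\ h_1= & \sqrt{4-d_3^2}\Big(\tfrac{-d_1^2+d_2^2+d_3^2}{2d_2 d_3}\cos\theta_3\sin\theta_2+\sin\theta_3\cos\theta_2\Big)-\tfrac{d\sin\theta_2}{2d_2},\\ f_2 = & d_3\sqrt{4-d_3^2}\sin\theta_3\big(d_1d-(d_1^2+d_2^2-d_3^2)\sqrt{4-d_1^2}\cos\theta_1\big)- d_1\sqrt{4-d_1^2}\sin\theta_1\big(d_3d-(-d_1^2+d_2^2+d_3^2)\sqrt{4-d_3^2}\cos\theta_3\big),\\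 g_2 = &\sqrt{4-d_3^2}\Big(\tfrac{d_1^2-d_2^2+d_3^2}{2d_1 d_3}\cos\theta_3\sin\theta_1+\sin\theta_3\cos\theta_1\Big)-\tfrac{d\sin\theta_1}{2d_1},\\ h_2 = &\sqrt{4-d_1^2}\Big(\tfrac{d_1^2-d_2^2+d_3^2}{2d_1 d_3}\cos\theta_1\sin\theta_3+\sin\theta_1\cos\theta_3\Big)-\tfrac{d\sin\theta_3}{2d_3},\\ f_3 = & d_1\sqrt{4-d_1^2}\sin\theta_1\big(d_2d-(-d_1^2+d_2^2+d_3^2)\sqrt{4-d_2^2}\cos\theta_2\big)-d_2\sqrt{4-d_2^2}\sin\theta_2\big(d_1d-(d_1^2-d_2^2+d_3^2)\sqrt{4-d_1^2}\cos\theta_1\big),\\ g_3 = &\sqrt{4-d_1^2}\Big(\tfrac{d_1^2+d_2^2-d_3^2}{2d_1 d_2}\cos\theta_1\sin\theta_2+\sin\theta_1\cos\theta_2\Big)-\tfrac{d\sin\theta_2}{2d_2},\\ h_3 = &\sqrt{4-d_2^2}\Big( \tfrac{d_1^2+d_2^2-d_3^2}{2d_1 d_2}\cos\theta_2\sin\theta_1+\sin\theta_2\cos\theta_1\Big)-\tfrac{d\sin\theta_1}{2d_1}. \end{align*}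
   Context: An equilateral hexagon is an ordered 6-tuple $H=(v_1,\dots,v_6)$ in $\mathbb{R}^3$ with $\|v_i-v_{i+1}\|=1$ (indices mod 6), edges $e_i=[v_i,v_{i+1}]$, oriented $v_1\to v_2\to\cdots\to v_6\to v_1$; embedded means non-adjacent edges are disjoint and adjacent ones meet only at their common endpoint. Standard position: $v_1=0$, $v_3$ on the positive $x$-axis, $v_5$ in the $xy$-plane with positive $y$-coordinate. Action-angle coordinates ($T_{135}$ triangulation), defined when $v_1,v_3,v_5$ are not collinear and $0<d_i<2$: $d_1=\|v_3-v_1\|$, $d_2=\|v_5-v_3\|$, $d_3=\|v_1-v_5\|$; with $m_1,m_2,m_3$ the midpoints of $[v_1,v_3],[v_3,v_5],[v_5,v_1]$, $u_1,u_2,u_3$ the unit vectors in the $xy$-plane perpendicular to these segments pointing toward the opposite vertex of triangle $v_1v_3v_5$ (toward $v_5,v_1,v_3$ respectively), and $e_z=(0,0,1)$, the angles $\theta_i\in[0,2\pi)$ are determined by $v_{2i}=m_i+\tfrac12\sqrt{4-d_i^2}(\cos\theta_i\,u_i+\sin\theta_i\,e_z)$ (regular planar hexagon: all $\theta_i=\pi$). Explicitly $v_3=(d_1,0,0)$, $v_5=\big(\tfrac{d_1^2-d_2^2+d_3^2}{2d_1},\tfrac{d}{2d_1},0\big)$, $v_2=\big(\tfrac{d_1}{2},\tfrac12\sqrt{4-d_1^2}\cos\theta_1,\tfrac12\sqrt{4-d_1^2}\sin\theta_1\big)$. Joint Chirality-Curl: $curl(H)=\operatorname{sign}\big((v_3-v_1)\times(v_5-v_1)\cdot(v_2-v_1)\big)$.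 For $i=2,4,6$, $T_i$ is the open triangular disk with vertices $v_{i-1},v_i,v_{i+1}$, oriented by the right-hand rule (normal $(v_i-v_{i-1})\times(v_{i+1}-v_i)$), and $\Delta_i$ is the algebraic intersection number of $T_i$ with the oriented polygon $H$. Then $J(H)=(\Delta_2\Delta_4\Delta_6,\ \Delta_2^2\Delta_4^2\Delta_6^2\,curl(H))$. *)

(* Defs.v *)
From Stdlib Require Import Reals Lra Lia ZArith ClassicalEpsilon.
Open Scope R_scope.

Definition vec := (R * R * R)%type.
Definition vx (v : vec) : R := fst (fst v).
Definition vy (v : vec) : R := snd (fst v).
Definition vz (v : vec) : R := snd v.
Definition mkv (x y z : R) : vec := (x, y, z).
Definition vadd (a b : vec) : vec := mkv (vx a + vx b) (vy a + vy b) (vz a + vz b).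
Definition vsub (a b : vec) : vec := mkv (vx a - vx b) (vy a - vy b) (vz a - vz b).
Definition vscale (k : R) (a : vec) : vec := mkv (k * vx a) (k * vy a) (k * vz a).
Definition dot (a b : vec) : R := vx a * vx b + vy a * vy b + vz a * vz b.
Definition cross (a b : vec) : vec :=
  mkv (vy a * vz b - vz a * vy b) (vz a * vx b - vx a * vz b) (vx a * vy b - vy a * vx b).
Definition vnorm (a : vec) : R := sqrt (dot a a).
Definition vdist (a b : vec) : R := vnorm (vsub a b).
Definition e_z : vec := mkv 0 0 1.
Definition midpoint (a b : vec) : vec := vscale (1/2) (vadd a b).

Definition Rsign (x : R) : Z :=
  if Rlt_dec 0 x then 1%Z else if Rlt_dec x 0 then (-1)%Z else 0%Z.

Record hexagon := Hex { hv1 : vec; hv2 : vec; hv3 : vec; hv4 : vec; hv5 : vec; hv6 : vec }.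

(* vertex v_i, indices taken mod 6 (v_0 = v_6, v_7 = v_1, ...) *)
Definition vert (H : hexagon) (i : nat) : vec :=
  match Nat.modulo i 6 with
  | 1%nat => hv1 H | 2%nat => hv2 H | 3%nat => hv3 H
  | 4%nat => hv4 H | 5%nat => hv5 H | _ => hv6 H
  end.

Definition on_seg (a b p : vec) : Prop :=
  exists t, 0 <= t <= 1 /\ p = vadd a (vscale t (vsub b a)).

Definition on_edge (H : hexagon) (i : nat) (p : vec) : Prop :=
  on_seg (vert H i) (vert H (S i)) p.

Definition equilateral (H : hexagon) : Prop :=
  forall i : nat, (1 <= i <= 6)%nat -> vdist (vert H i) (vert H (S i)) = 1.

(* non-adjacent edges are disjoint; adjacent edges e_i, e_{i+1} meet only at v_{i+1} *)
Definition embedded (H : hexagon) : Prop :=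
  (forall i j : nat, (1 <= i <= 6)%nat -> (1 <= j <= 6)%nat ->
     (2 <= Nat.modulo (j + 6 - i) 6 <= 4)%nat ->
     forall p, ~ (on_edge H i p /\ on_edge H j p)) /\
  (forall i : nat, (1 <= i <= 6)%nat ->
     forall p, on_edge H i p -> on_edge H (S i) p -> p = vert H (S i)).

Definition standard_position (H : hexagon) : Prop :=
  hv1 H = mkv 0 0 0 /\
  0 < vx (hv3 H) /\ vy (hv3 H) = 0 /\ vz (hv3 H) = 0 /\
  0 < vy (hv5 H) /\ vz (hv5 H) = 0.

Definition dg1 (H : hexagon) : R := vdist (hv3 H) (hv1 H).
Definition dg2 (H : hexagon) : R := vdist (hv5 H) (hv3 H).
Definition dg3 (H : hexagon) : R := vdist (hv1 H) (hv5 H).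

Definition collinear (a b c : vec) : Prop := cross (vsub b a) (vsub c a) = mkv 0 0 0.

Definition aa_defined (H : hexagon) : Prop :=
  ~ collinear (hv1 H) (hv3 H) (hv5 H) /\
  0 < dg1 H < 2 /\ 0 < dg2 H < 2 /\ 0 < dg3 H < 2.

(* unit vector perpendicular to segment [a,b], in the plane of a,b,c,
   pointing toward the opposite vertex c *)
Definition perp_toward (a b c : vec) : vec :=
  let w := vsub (vsub c a) (vscale (dot (vsub c a) (vsub b a) / dot (vsub b a) (vsub b a)) (vsub b a)) in
  vscale (/ vnorm w) w.

Definition angle_rep (a b c p : vec) (dist th : R) : Prop :=
  p = vadd (midpoint a b)
           (vscale (/2 * sqrt (4 - dist ^ 2))
                   (vadd (vscale (cos th) (perp_toward a b c)) (vscale (sin th) e_z))).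

Definition is_angles (H : hexagon) (t1 t2 t3 : R) : Prop :=
  0 <= t1 < 2 * PI /\ 0 <= t2 < 2 * PI /\ 0 <= t3 < 2 * PI /\
  angle_rep (hv1 H) (hv3 H) (hv5 H) (hv2 H) (dg1 H) t1 /\
  angle_rep (hv3 H) (hv5 H) (hv1 H) (hv4 H) (dg2 H) t2 /\
  angle_rep (hv5 H) (hv1 H) (hv3 H) (hv6 H) (dg3 H) t3.

Definition curl (H : hexagon) : Z :=
  Rsign (dot (cross (vsub (hv3 H) (hv1 H)) (vsub (hv5 H) (hv1 H))) (vsub (hv2 H) (hv1 H))).

Definition in_open_tri (a b c p : vec) : Prop :=
  exists al be ga, 0 < al /\ 0 < be /\ 0 < ga /\ al + be + ga = 1 /\
    p = vadd (vscale al a) (vadd (vscale be b) (vscale ga c)).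

Definition decP (P : Prop) : bool :=
  if excluded_middle_informative P then true else false.

(* Signed contribution of the oriented edge a -> b to the intersection number
   with the oriented open triangle (a0,a1,a2), normal n = (a1-a0) x (a2-a1).
   Heights ha, hb are signed distances (times |n|) to the plane of the
   triangle. A crossing from the negative to the non-negative side counts +1,
   from the non-negative to the negative side counts -1 (half-open convention,
   which gives the correct count also when the polygon passes through the
   plane at a vertex), provided the crossing point lies in the open triangle. *)
Definition edge_contrib (a0 a1 a2 a b : vec) : Z :=
  let n := cross (vsub a1 a0) (vsub a2 a1) in
  let ha := dot n (vsub a a1) in
  let hb := dot n (vsub b a1) in
  let p := vadd a (vscale (ha / (ha - hb)) (vsub b a)) in
  if Rlt_dec ha 0 then
    (if Rle_dec 0 hb then (if decP (in_open_tri a0 a1 a2 p) then 1%Z else 0%Z) else 0%Z)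
  else
    (if Rlt_dec hb 0 then (if decP (in_open_tri a0 a1 a2 p) then (-1)%Z else 0%Z) else 0%Z).

(* Delta_i : algebraic intersection number of T_i = (v_{i-1}, v_i, v_{i+1})
   with the oriented polygon H (sum over the six oriented edges e_1..e_6). *)
Definition Delta (H : hexagon) (i : nat) : Z :=
  let a0 := vert H (Nat.pred i) in
  let a1 := vert H i in
  let a2 := vert H (S i) in
  (edge_contrib a0 a1 a2 (vert H 1) (vert H 2) +
   edge_contrib a0 a1 a2 (vert H 2) (vert H 3) +
   edge_contrib a0 a1 a2 (vert H 3) (vert H 4) +
   edge_contrib a0 a1 a2 (vert H 4) (vert H 5) +
   edge_contrib a0 a1 a2 (vert H 5) (vert H 6) +
   edge_contrib a0 a1 a2 (vert H 6) (vert H 7))%Z.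

Definition JCC (H : hexagon) : Z * Z :=
  let D2 := Delta H 2 in let D4 := Delta H 4 in let D6 := Delta H 6 in
  ((D2 * D4 * D6)%Z, (D2 ^ 2 * D4 ^ 2 * D6 ^ 2 * curl H)%Z).

Definition ddd (d1 d2 d3 : R) : R :=
  sqrt (2 * d1^2 * d2^2 + 2 * d1^2 * d3^2 + 2 * d2^2 * d3^2 - d1^4 - d2^4 - d3^4).


Definition f1 (d1 d2 d3 t1 t2 t3 : R) : R :=
  let d := ddd d1 d2 d3 in let s1 := sqrt (4 - d1^2) in
  let s2 := sqrt (4 - d2^2) in let s3 := sqrt (4 - d3^2) in
  d2 * s2 * sin t2 * (d3 * d - (d1^2 - d2^2 + d3^2) * s3 * cos t3)
  - d3 * s3 * sin t3 * (d2 * d - (d1^2 + d2^2 - d3^2) * s2 * cos t2).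
Definition g1 (d1 d2 d3 t1 t2 t3 : R) : R :=
  let d := ddd d1 d2 d3 in let s1 := sqrt (4 - d1^2) in
  let s2 := sqrt (4 - d2^2) in let s3 := sqrt (4 - d3^2) in
  s2 * ((- d1^2 + d2^2 + d3^2) / (2 * d2 * d3) * cos t2 * sin t3 + sin t2 * cos t3)
  - d * sin t3 / (2 * d3).
Definition h1 (d1 d2 d3 t1 t2 t3 : R) : R :=
  let d := ddd d1 d2 d3 in let s1 := sqrt (4 - d1^2) in
  let s2 := sqrt (4 - d2^2) in let s3 := sqrt (4 - d3^2) in
  s3 * ((- d1^2 + d2^2 + d3^2) / (2 * d2 * d3) * cos t3 * sin t2 + sin t3 * cos t2)
  - d * sin t2 / (2 * d2).
Definition f2 (d1 d2 d3 t1 t2 t3 : R) : R :=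
  let d := ddd d1 d2 d3 in let s1 := sqrt (4 - d1^2) in
  let s2 := sqrt (4 - d2^2) in let s3 := sqrt (4 - d3^2) in
  d3 * s3 * sin t3 * (d1 * d - (d1^2 + d2^2 - d3^2) * s1 * cos t1)
  - d1 * s1 * sin t1 * (d3 * d - (- d1^2 + d2^2 + d3^2) * s3 * cos t3).
Definition g2 (d1 d2 d3 t1 t2 t3 : R) : R :=
  let d := ddd d1 d2 d3 in let s1 := sqrt (4 - d1^2) in
  let s2 := sqrt (4 - d2^2) in let s3 := sqrt (4 - d3^2) in
  s3 * ((d1^2 - d2^2 + d3^2) / (2 * d1 * d3) * cos t3 * sin t1 + sin t3 * cos t1)
  - d * sin t1 / (2 * d1).
Definition h2 (d1 d2 d3 t1 t2 t3 : R) : R :=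
  let d := ddd d1 d2 d3 in let s1 := sqrt (4 - d1^2) in
  let s2 := sqrt (4 - d2^2) in let s3 := sqrt (4 - d3^2) in
  s1 * ((d1^2 - d2^2 + d3^2) / (2 * d1 * d3) * cos t1 * sin t3 + sin t1 * cos t3)
  - d * sin t3 / (2 * d3).
Definition f3 (d1 d2 d3 t1 t2 t3 : R) : R :=
  let d := ddd d1 d2 d3 in let s1 := sqrt (4 - d1^2) in
  let s2 := sqrt (4 - d2^2) in let s3 := sqrt (4 - d3^2) in
  d1 * s1 * sin t1 * (d2 * d - (- d1^2 + d2^2 + d3^2) * s2 * cos t2)
  - d2 * s2 * sin t2 * (d1 * d - (d1^2 - d2^2 + d3^2) * s1 * cos t1).
Definition g3 (d1 d2 d3 t1 t2 t3 : R) : R :=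
  let d := ddd d1 d2 d3 in let s1 := sqrt (4 - d1^2) in
  let s2 := sqrt (4 - d2^2) in let s3 := sqrt (4 - d3^2) in
  s1 * ((d1^2 + d2^2 - d3^2) / (2 * d1 * d2) * cos t1 * sin t2 + sin t1 * cos t2)
  - d * sin t2 / (2 * d2).
Definition h3 (d1 d2 d3 t1 t2 t3 : R) : R :=
  let d := ddd d1 d2 d3 in let s1 := sqrt (4 - d1^2) in
  let s2 := sqrt (4 - d2^2) in let s3 := sqrt (4 - d3^2) in
  s2 * ((d1^2 + d2^2 - d3^2) / (2 * d1 * d2) * cos t2 * sin t1 + sin t2 * cos t1)
  - d * sin t1 / (2 * d1).

(* Main.v *)
Require Import Defs.
From Stdlib Require Import Reals ZArith Lra Lia Nsatz ClassicalEpsilon.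
Open Scope R_scope.

Definition ht (a0 a1 a2 x : vec) : R := dot (cross (vsub a1 a0) (vsub a2 a1)) (vsub x a1).
Definition det3 (a b c : vec) : R := dot a (cross b c).

Lemma vec_comp (u v : vec) : u = v -> vx u = vx v /\ vy u = vy v /\ vz u = vz v.
Proof. intros ->; auto. Qed.

Lemma vec_ext (u v : vec) : vx u = vx v -> vy u = vy v -> vz u = vz v -> u = v.
Proof. destruct u as [[a b] c], v as [[a' b'] c']; unfold vx, vy, vz; simpl; intros -> -> ->; reflexivity. Qed.

Ltac clear_ineq := repeat match goal with
 | H : ?a < ?b |- _ => clear H | H : ?a <= ?b |- _ => clear H
 | H : _ \/ _ |- _ => clear H | H : _ /\ _ |- _ => clear H | H : ?a <> ?b |- _ => clear H end.
Ltac nsatz' := clear_ineq; nsatz.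

Ltac vsimpl := unfold ht, det3, dot, cross, vsub, vadd, vscale, mkv, vx, vy, vz in *; cbn [fst snd] in *.

Lemma ec_cases a0 a1 a2 a b :
  let ha := ht a0 a1 a2 a in let hb := ht a0 a1 a2 b in
  let p := vadd a (vscale (ha / (ha - hb)) (vsub b a)) in
  (edge_contrib a0 a1 a2 a b = 1%Z /\ ha < 0 /\ 0 <= hb /\ in_open_tri a0 a1 a2 p) \/
  (edge_contrib a0 a1 a2 a b = (-1)%Z /\ 0 <= ha /\ hb < 0 /\ in_open_tri a0 a1 a2 p) \/
  edge_contrib a0 a1 a2 a b = 0%Z.
Proof.
  intros ha hb p. unfold edge_contrib. cbv zeta.
  change (dot (cross (vsub a1 a0) (vsub a2 a1)) (vsub a a1)) with ha.
  change (dot (cross (vsub a1 a0) (vsub a2 a1)) (vsub b a1)) with hb.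
  change (vadd a (vscale (ha / (ha - hb)) (vsub b a))) with p.
  unfold decP.
  destruct (Rlt_dec ha 0) as [h1|h1].
  - destruct (Rle_dec 0 hb) as [h2|h2]; [|auto].
    destruct (excluded_middle_informative (in_open_tri a0 a1 a2 p)); auto.
  - destruct (Rlt_dec hb 0) as [h2|h2]; [|auto].
    destruct (excluded_middle_informative (in_open_tri a0 a1 a2 p)); auto.
    right; left; repeat split; auto; lra.
Qed.

Lemma open_eq a0 a1 a2 p q : p = q -> in_open_tri a0 a1 a2 p -> in_open_tri a0 a1 a2 q.
Proof. intros ->; auto. Qed.

Lemma open_vertex_contra a0 a1 a2 x q :
  ht a0 a1 a2 x <> 0 -> (q = a0 \/ q = a1 \/ q = a2) -> in_open_tri a0 a1 a2 q -> False.
Proof.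
  intros Hx Hq [al [be [ga [Hal [Hbe [Hga [Hs Hp]]]]]]].
  apply Hx.
  destruct a0 as [[p0 q0] r0], a1 as [[p1 q1] r1], a2 as [[p2 q2] r2], x as [[xx xy] xz].
  destruct Hq as [ -> | [ -> | -> ] ]; apply vec_comp in Hp; vsimpl; destruct Hp as [E1 [E2 E3]].
  - assert (ga * ((((q1 - q0) * (r2 - r1) - (r1 - r0) * (q2 - q1)) * (xx - p1) +
    ((r1 - r0) * (p2 - p1) - (p1 - p0) * (r2 - r1)) * (xy - q1) +
    ((p1 - p0) * (q2 - q1) - (q1 - q0) * (p2 - p1)) * (xz - r1))) = 0) by nsatz.
    apply Rmult_integral in H; destruct H; [lra|auto].
  - assert (ga * ((((q1 - q0) * (r2 - r1) - (r1 - r0) * (q2 - q1)) * (xx - p1) +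
    ((r1 - r0) * (p2 - p1) - (p1 - p0) * (r2 - r1)) * (xy - q1) +
    ((p1 - p0) * (q2 - q1) - (q1 - q0) * (p2 - p1)) * (xz - r1))) = 0) by nsatz.
    apply Rmult_integral in H; destruct H; [lra|auto].
  - assert (be * ((((q1 - q0) * (r2 - r1) - (r1 - r0) * (q2 - q1)) * (xx - p1) +
    ((r1 - r0) * (p2 - p1) - (p1 - p0) * (r2 - r1)) * (xy - q1) +
    ((p1 - p0) * (q2 - q1) - (q1 - q0) * (p2 - p1)) * (xz - r1))) = 0) by nsatz.
    apply Rmult_integral in H; destruct H; [lra|auto].
Qed.

Lemma vadd_scale0 a d : vadd a (vscale 0 d) = a.
Proof. apply vec_ext; vsimpl; ring. Qed.
Lemma vadd_scale1 a b : vadd a (vscale 1 (vsub b a)) = b.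
Proof. apply vec_ext; vsimpl; ring. Qed.

Lemma ht_vertex a0 a1 a2 a : (a = a0 \/ a = a1 \/ a = a2) -> ht a0 a1 a2 a = 0.
Proof.
  destruct a0 as [[? ?] ?], a1 as [[? ?] ?], a2 as [[? ?] ?];
  intros [ -> | [ -> | -> ] ]; vsimpl; ring.
Qed.

Lemma ec_start_vertex a0 a1 a2 a b : (a = a0 \/ a = a1 \/ a = a2) -> edge_contrib a0 a1 a2 a b = 0%Z.
Proof.
  intros Ha. pose proof (ht_vertex a0 a1 a2 a Ha) as Hha.
  destruct (ec_cases a0 a1 a2 a b) as [[E [H1 _]]|[[E [_ [H2 Hin]]]|E]]; auto.
  - lra.
  - exfalso. eapply (open_vertex_contra a0 a1 a2 b a); [lra | exact Ha | ].
    eapply open_eq; [|exact Hin]. rewrite Hha.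
    replace (0 / (0 - ht a0 a1 a2 b)) with 0 by (unfold Rdiv; ring).
    apply vadd_scale0.
Qed.

Lemma ec_end_vertex a0 a1 a2 a b : (b = a0 \/ b = a1 \/ b = a2) -> edge_contrib a0 a1 a2 a b = 0%Z.
Proof.
  intros Hb. pose proof (ht_vertex a0 a1 a2 b Hb) as Hhb.
  destruct (ec_cases a0 a1 a2 a b) as [[E [H1 [_ Hin]]]|[[E [_ [H2 Hin]]]|E]]; auto.
  - exfalso. eapply (open_vertex_contra a0 a1 a2 a b); [lra | exact Hb | ].
    eapply open_eq; [|exact Hin]. rewrite Hhb.
    replace (ht a0 a1 a2 a / (ht a0 a1 a2 a - 0)) with 1 by (field; lra).
    apply vadd_scale1.
  - lra.
Qed.

Lemma frac_bounds x y : (x < 0 <= y) \/ (y < 0 <= x) -> 0 <= x/(x-y) <= 1.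
Proof.
  intros H. assert (Hne : x - y <> 0) by lra.
  set (l := x/(x-y)). assert (E : l * (x - y) = x) by (unfold l; field; auto).
  destruct H as [[H1 H2]|[H1 H2]]; split; nra.
Qed.

Lemma ec_cross a0 a1 a2 a b : edge_contrib a0 a1 a2 a b <> 0%Z ->
  exists l al be ga, 0 <= l <= 1 /\ 0 < al /\ 0 < be /\ 0 < ga /\ al + be + ga = 1 /\
    vadd a (vscale l (vsub b a)) = vadd (vscale al a0) (vadd (vscale be a1) (vscale ga a2)).
Proof.
  intros Hne.
  destruct (ec_cases a0 a1 a2 a b) as [[E [H1 [H2 Hin]]]|[[E [H1 [H2 Hin]]]|E]]; [| |tauto];
  destruct Hin as [al [be [ga [? [? [? [? Hp]]]]]]];
  exists (ht a0 a1 a2 a / (ht a0 a1 a2 a - ht a0 a1 a2 b)), al, be, ga;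
  repeat split; auto; apply frac_bounds; auto.
Qed.

Lemma flat_cancel a0 a1 a2 a m b : ht a0 a1 a2 m = 0 ->
  (ht a0 a1 a2 a < 0 <-> ht a0 a1 a2 b < 0) ->
  (edge_contrib a0 a1 a2 a m + edge_contrib a0 a1 a2 m b)%Z = 0%Z.
Proof.
  intros Hm Hab. unfold edge_contrib; cbv zeta.
  change (dot (cross (vsub a1 a0) (vsub a2 a1)) (vsub a a1)) with (ht a0 a1 a2 a).
  change (dot (cross (vsub a1 a0) (vsub a2 a1)) (vsub m a1)) with (ht a0 a1 a2 m).
  change (dot (cross (vsub a1 a0) (vsub a2 a1)) (vsub b a1)) with (ht a0 a1 a2 b).
  rewrite Hm.
  set (ha := ht a0 a1 a2 a) in *. set (hb := ht a0 a1 a2 b) in *.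
  destruct (Rlt_dec 0 0) as [F|_]; [lra|].
  destruct (Rle_dec 0 0) as [_|F]; [|lra].
  destruct (Rlt_dec ha 0) as [h1|h1].
  - assert (h2 : hb < 0) by (apply Hab; auto).
    destruct (Rlt_dec hb 0) as [_|F]; [|lra].
    replace (vadd a (vscale (ha / (ha - 0)) (vsub m a))) with m
      by (replace (ha / (ha - 0)) with 1 by (field; lra); symmetry; apply vadd_scale1).
    replace (vadd m (vscale (0 / (0 - hb)) (vsub b m))) with m
      by (replace (0 / (0 - hb)) with 0 by (unfold Rdiv; ring); symmetry; apply vadd_scale0).
    destruct (decP (in_open_tri a0 a1 a2 m)); reflexivity.
  - destruct (Rlt_dec hb 0) as [h2|_]; [exfalso; apply h1, Hab; auto|reflexivity].
Qed.

Lemma ht_flat a0 a1 a2 x : vz a0 = 0 -> vz a1 = 0 -> vz a2 = 0 ->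
  ht a0 a1 a2 x = vz (cross (vsub a1 a0) (vsub a2 a1)) * vz x.
Proof.
  destruct a0 as [[? ?] ?], a1 as [[? ?] ?], a2 as [[? ?] ?], x as [[? ?] ?].
  vsimpl. intros -> -> ->. ring.
Qed.

Ltac dvec := repeat match goal with
  | v : vec |- _ => let x := fresh "x" in let y := fresh "y" in let z := fresh "z" in
                    destruct v as [[x y] z]
  end.

Lemma step_E1 a0 a1 a2 b0 b1 P l al be ga : al + be + ga = 1 ->
  P = vadd b0 (vscale l (vsub b1 b0)) ->
  P = vadd (vscale al a0) (vadd (vscale be a1) (vscale ga a2)) ->
  be * ht b0 b1 a0 a1 + ga * ht b0 b1 a0 a2 = 0.
Proof.
  intros Hs H1 H2. rewrite H1 in H2. clear H1 P.
  apply vec_comp in H2. dvec. vsimpl. destruct H2 as [E1 [E2 E3]]. nsatz.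
Qed.

Lemma step_E2 a0 a1 a2 b0 b1 Q m al be ga : al + be + ga = 1 ->
  Q = vadd a1 (vscale m (vsub a2 a1)) ->
  Q = vadd (vscale al b0) (vadd (vscale be b1) (vscale ga a0)) ->
  al * ht a0 a1 a2 b0 + be * ht a0 a1 a2 b1 = 0.
Proof.
  intros Hs H1 H2. rewrite H1 in H2. clear H1 Q.
  apply vec_comp in H2. dvec. vsimpl. destruct H2 as [E1 [E2 E3]]. nsatz.
Qed.

Lemma step_K be ga m h1 h2 : be * h1 + ga * h2 = 0 -> (1 - m) * h1 + m * h2 = 0 ->
  (h1 <> 0 \/ h2 <> 0) -> be * m = ga * (1 - m).
Proof.
  intros E1 E2 Hn.
  assert (F1 : (be * m - ga * (1 - m)) * h1 = 0).
  { replace ((be * m - ga * (1 - m)) * h1) with (m*(be*h1+ga*h2) - ga*((1-m)*h1+m*h2)) by ring.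
    rewrite E1, E2; ring. }
  assert (F2 : (be * m - ga * (1 - m)) * h2 = 0).
  { replace ((be * m - ga * (1 - m)) * h2) with (be*((1-m)*h1+m*h2) - (1-m)*(be*h1+ga*h2)) by ring.
    rewrite E1, E2; ring. }
  destruct Hn as [Hn|Hn].
  - apply Rmult_integral in F1; destruct F1; [lra|tauto].
  - apply Rmult_integral in F2; destruct F2; [lra|tauto].
Qed.

Lemma step_F5 a0 a1 a2 P Q m al be ga : al + be + ga = 1 -> be * m = ga * (1 - m) ->
  P = vadd (vscale al a0) (vadd (vscale be a1) (vscale ga a2)) ->
  Q = vadd a1 (vscale m (vsub a2 a1)) ->
  vsub P a0 = vscale (be + ga) (vsub Q a0).
Proof.
  intros Hs K -> ->. apply vec_ext; dvec; vsimpl; nsatz.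
Qed.

Lemma step_F6 a0 b0 b1 P Q l al be ga : al + be + ga = 1 -> al * l = be * (1 - l) ->
  Q = vadd (vscale al b0) (vadd (vscale be b1) (vscale ga a0)) ->
  P = vadd b0 (vscale l (vsub b1 b0)) ->
  vsub Q a0 = vscale (al + be) (vsub P a0).
Proof.
  intros Hs K -> ->. apply vec_ext; dvec; vsimpl; nsatz.
Qed.

Lemma step_F7 a0 P Q k t : 0 < k < 1 -> 0 < t < 1 ->
  vsub P a0 = vscale k (vsub Q a0) -> vsub Q a0 = vscale t (vsub P a0) -> P = a0.
Proof.
  intros Hk Ht E1 E2. rewrite E2 in E1. apply vec_comp in E1.
  destruct E1 as [E1 [E2' E3]]. dvec. vsimpl.
  assert (0 < 1 - k * t) by nra.
  apply vec_ext; vsimpl; nra.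
Qed.

Lemma ec_seg a0 a1 a2 a b : edge_contrib a0 a1 a2 a b <> 0%Z ->
  exists l, (1 - l) * ht a0 a1 a2 a + l * ht a0 a1 a2 b = 0 /\
   (ht a0 a1 a2 a <> 0 \/ ht a0 a1 a2 b <> 0) /\
   in_open_tri a0 a1 a2 (vadd a (vscale l (vsub b a))).
Proof.
  intros Hne. destruct (ec_cases a0 a1 a2 a b) as [[E [H1 [H2 Hin]]]|[[E [H1 [H2 Hin]]]|E]]; [| |tauto];
  eexists; (split; [|split; [|exact Hin]]).
  - field; lra.
  - left; lra.
  - field; lra.
  - right; lra.
Qed.

Lemma Lmix a0 a1 a2 b0 b1 :
  edge_contrib a0 a1 a2 b0 b1 <> 0%Z -> edge_contrib b0 b1 a0 a1 a2 <> 0%Z -> False.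
Proof.
  intros HA HB.
  destruct (ec_seg _ _ _ _ _ HA) as [l [El [NA OA]]].
  destruct (ec_seg _ _ _ _ _ HB) as [m [Em [NB OB]]].
  set (P := vadd b0 (vscale l (vsub b1 b0))) in *.
  set (Q := vadd a1 (vscale m (vsub a2 a1))) in *.
  destruct OA as [al [be [ga [Hal [Hbe [Hga [Hs HP]]]]]]].
  destruct OB as [al' [be' [ga' [Hal' [Hbe' [Hga' [Hs' HQ]]]]]]].
  pose proof (step_E1 a0 a1 a2 b0 b1 P l al be ga Hs eq_refl HP) as E1.
  pose proof (step_E2 a0 a1 a2 b0 b1 Q m al' be' ga' Hs' eq_refl HQ) as E2.
  pose proof (step_K be ga m _ _ E1 Em NB) as K.
  pose proof (step_K al' be' l _ _ E2 El NA) as K'.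
  pose proof (step_F5 a0 a1 a2 P Q m al be ga Hs K HP eq_refl) as F5.
  pose proof (step_F6 a0 b0 b1 P Q l al' be' ga' Hs' K' HQ eq_refl) as F6.
  assert (HP0 : P = a0) by (eapply step_F7; [ | | exact F5 | exact F6]; lra).
  assert (Ho : in_open_tri a0 a1 a2 a0).
  { eapply open_eq; [exact HP0|]. exists al, be, ga; repeat split; auto. }
  destruct NA as [NA|NA]; exact (open_vertex_contra a0 a1 a2 _ a0 NA (or_introl eq_refl) Ho).
Qed.

Lemma step_det a0 a1 a2 b0 b1 P l al be ga : al + be + ga = 1 ->
  P = vadd b0 (vscale l (vsub b1 b0)) ->
  P = vadd (vscale al a0) (vadd (vscale be a1) (vscale ga a2)) ->
  l * det3 (vsub a2 a1) (vsub b0 a1) (vsub b1 a1) = - al * ht a0 a1 a2 b0.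
Proof.
  intros Hs H1 H2. rewrite H1 in H2. clear H1 P.
  apply vec_comp in H2. dvec. vsimpl. destruct H2 as [E1 [E2 E3]]. nsatz.
Qed.

Lemma GL a0 a1 a2 b0 b1 :
  edge_contrib a0 a1 a2 b0 b1 = (-1)%Z -> 0 < ht a0 a1 a2 b0 -> 0 < ht b0 b1 a0 a2 ->
  ht a0 a1 a2 b1 < 0 /\ ht b0 b1 a0 a1 < 0 /\ det3 (vsub a2 a1) (vsub b0 a1) (vsub b1 a1) < 0.
Proof.
  intros Hec Hb0 Ha2.
  destruct (ec_cases a0 a1 a2 b0 b1) as [[E _]|[[_ [H1 [H2 Hin]]]|E]]; [rewrite Hec in E; discriminate| |rewrite Hec in E; discriminate].
  set (l := ht a0 a1 a2 b0 / (ht a0 a1 a2 b0 - ht a0 a1 a2 b1)) in *.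
  assert (Hl : 0 < l) by (unfold l; apply Rdiv_lt_0_compat; lra).
  set (P := vadd b0 (vscale l (vsub b1 b0))) in *.
  destruct Hin as [al [be [ga [Hal [Hbe [Hga [Hs HP]]]]]]].
  pose proof (step_E1 a0 a1 a2 b0 b1 P l al be ga Hs eq_refl HP) as E1.
  pose proof (step_det a0 a1 a2 b0 b1 P l al be ga Hs eq_refl HP) as E2.
  split; [lra|split]; nra.
Qed.

Lemma perp_plane ax ay bx by_ cx cy L : 0 < L -> L*L = (bx-ax)*(bx-ax) + (by_-ay)*(by_-ay) ->
  0 < (bx-ax)*(cy-ay) - (by_-ay)*(cx-ax) ->
  perp_toward (mkv ax ay 0) (mkv bx by_ 0) (mkv cx cy 0) = mkv (-(by_-ay)/L) ((bx-ax)/L) 0.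
Proof.
  intros HL HLL Hcr. set (cr := (bx-ax)*(cy-ay) - (by_-ay)*(cx-ax)) in *.
  unfold perp_toward; cbv zeta.
  assert (Hbb : dot (vsub (mkv bx by_ 0) (mkv ax ay 0)) (vsub (mkv bx by_ 0) (mkv ax ay 0)) = L*L)
    by (rewrite HLL; vsimpl; ring).
  rewrite Hbb.
  set (w := vsub (vsub (mkv cx cy 0) (mkv ax ay 0)) _).
  assert (Hw : w = mkv (-(by_-ay)*cr/(L*L)) ((bx-ax)*cr/(L*L)) 0).
  { unfold w; apply vec_ext; vsimpl; unfold cr; field_simplify_eq; try lra. all: cbn [pow]; clear Hbb w; clearbody cr; nsatz'. }
  assert (Hn : vnorm w = cr / L).
  { unfold vnorm. rewrite Hw. replace (dot _ _) with ((cr/L)*(cr/L)).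
    - apply sqrt_square. apply Rlt_le, Rdiv_lt_0_compat; lra.
    - vsimpl. field_simplify_eq; try lra. cbn [pow]. clear Hw Hbb w. clearbody cr. nsatz'. }
  rewrite Hn, Hw. apply vec_ext; vsimpl; field; lra.
Qed.

Lemma coords (H : hexagon) (t1 t2 t3 : R) : standard_position H -> aa_defined H -> is_angles H t1 t2 t3 ->
  let d1 := dg1 H in let d2 := dg2 H in let d3 := dg3 H in
  let s1 := sqrt (4 - d1^2) in let s2 := sqrt (4 - d2^2) in let s3 := sqrt (4 - d3^2) in
  exists X5 Y5,
   hv1 H = mkv 0 0 0 /\ hv3 H = mkv d1 0 0 /\ hv5 H = mkv X5 Y5 0 /\
   0 < d1 < 2 /\ 0 < d2 < 2 /\ 0 < d3 < 2 /\ 0 < Y5 /\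
   d2*d2 = (X5-d1)*(X5-d1) + Y5*Y5 /\ d3*d3 = X5*X5 + Y5*Y5 /\
   ddd d1 d2 d3 = 2*d1*Y5 /\
   0 < s1 /\ 0 < s2 /\ 0 < s3 /\
   s1*s1 = 4 - d1*d1 /\ s2*s2 = 4 - d2*d2 /\ s3*s3 = 4 - d3*d3 /\
   hv2 H = mkv (d1/2) (s1/2*cos t1) (s1/2*sin t1) /\
   hv4 H = mkv ((d1+X5)/2 - s2/2*cos t2*Y5/d2) (Y5/2 + s2/2*cos t2*(X5-d1)/d2) (s2/2*sin t2) /\
   hv6 H = mkv (X5/2 + s3/2*cos t3*Y5/d3) (Y5/2 - s3/2*cos t3*X5/d3) (s3/2*sin t3).
Proof.
  intros [E1 [HX3 [HY3 [HZ3 [HY5 HZ5]]]]] [_ [Hd1 [Hd2 Hd3]]] [_ [_ [_ [A1 [A2 A3]]]]].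
  intros d1 d2 d3 s1 s2 s3.
  set (X3 := vx (hv3 H)) in *. set (X5 := vx (hv5 H)). set (Y5 := vy (hv5 H)) in *.
  assert (E3 : hv3 H = mkv X3 0 0) by (apply vec_ext; vsimpl; auto).
  assert (E5 : hv5 H = mkv X5 Y5 0) by (apply vec_ext; vsimpl; auto).
  assert (D1 : d1 = X3).
  { unfold d1, dg1, vdist, vnorm. rewrite E3, E1. vsimpl.
    replace ((X3 - 0) * (X3 - 0) + (0 - 0) * (0 - 0) + (0 - 0) * (0 - 0)) with (X3*X3) by ring.
    apply sqrt_square; lra. }
  assert (D2 : d2 = sqrt ((X5-X3)*(X5-X3) + Y5*Y5)).
  { unfold d2, dg2, vdist, vnorm. rewrite E3, E5. vsimpl. f_equal; ring. }
  assert (D3 : d3 = sqrt (X5*X5 + Y5*Y5)).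
  { unfold d3, dg3, vdist, vnorm. rewrite E1, E5. vsimpl. f_equal; ring. }
  fold d1 d2 d3 in Hd1, Hd2, Hd3.
  assert (D2s : d2*d2 = (X5-X3)*(X5-X3) + Y5*Y5) by (rewrite D2; apply sqrt_sqrt; apply Rplus_le_le_0_compat; apply Rle_0_sqr).
  assert (D3s : d3*d3 = X5*X5 + Y5*Y5) by (rewrite D3; apply sqrt_sqrt; apply Rplus_le_le_0_compat; apply Rle_0_sqr).
  assert (S : forall d, 0 < d < 2 -> 0 < sqrt (4 - d^2) /\ sqrt (4 - d^2) * sqrt (4 - d^2) = 4 - d*d).
  { intros d Hd. split. apply sqrt_lt_R0. nra. rewrite sqrt_sqrt. ring. nra. }
  destruct (S d1 Hd1) as [S1 S1s]. destruct (S d2 Hd2) as [S2 S2s]. destruct (S d3 Hd3) as [S3 S3s].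
  fold s1 s2 s3 in S1, S2, S3, S1s, S2s, S3s.
  exists X5, Y5.
  rewrite <- D1 in E3, D2s.
  assert (HDD : ddd d1 d2 d3 = 2*d1*Y5).
  { unfold ddd. replace (2 * d1 ^ 2 * d2 ^ 2 + 2 * d1 ^ 2 * d3 ^ 2 + 2 * d2 ^ 2 * d3 ^ 2 - d1 ^ 4 - d2 ^ 4 - d3 ^ 4) with ((2*d1*Y5)*(2*d1*Y5)).
    - apply sqrt_square. nra.
    - cbn [pow]. clear - D2s D3s. nsatz'. }
  unfold angle_rep in A1, A2, A3. fold d1 d2 d3 in A1, A2, A3. fold s1 s2 s3 in A1, A2, A3.
  rewrite E1, E3, E5 in A1, A2, A3.
  rewrite (perp_plane 0 0 d1 0 X5 Y5 d1) in A1 by (try lra; ring_simplify; nra).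
  rewrite (perp_plane d1 0 X5 Y5 0 0 d2) in A2 by (try lra; ring_simplify; nra).
  rewrite (perp_plane X5 Y5 0 0 d1 0 d3) in A3 by (try lra; ring_simplify; nra).
  repeat split; auto; try lra.
  - rewrite A1; apply vec_ext; unfold midpoint, e_z; vsimpl; field; lra.
  - rewrite A2; apply vec_ext; unfold midpoint, e_z; vsimpl; field; lra.
  - rewrite A3; apply vec_ext; unfold midpoint, e_z; vsimpl; field; lra.
Qed.

Section Ids.
Variables (d1 d2 d3 X5 Y5 s1 s2 s3 t1 t2 t3 : R).
Hypotheses (Hd1 : 0 < d1) (Hd2 : 0 < d2) (Hd3 : 0 < d3) (Hs1 : 0 < s1) (Hs2 : 0 < s2) (Hs3 : 0 < s3)
  (D2s : d2*d2 = (X5-d1)*(X5-d1) + Y5*Y5) (D3s : d3*d3 = X5*X5 + Y5*Y5)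
  (HD : ddd d1 d2 d3 = 2*d1*Y5)
  (E1 : sqrt (4 - d1^2) = s1) (E2 : sqrt (4 - d2^2) = s2) (E3 : sqrt (4 - d3^2) = s3)
  (T1 : cos t1 * cos t1 + sin t1 * sin t1 = 1) (T2 : cos t2 * cos t2 + sin t2 * sin t2 = 1)
  (T3 : cos t3 * cos t3 + sin t3 * sin t3 = 1)
  (S1s : s1*s1 = 4 - d1*d1) (S2s : s2*s2 = 4 - d2*d2) (S3s : s3*s3 = 4 - d3*d3).

Definition V1 := mkv 0 0 0.
Definition V2 := mkv (d1/2) (s1/2*cos t1) (s1/2*sin t1).
Definition V3 := mkv d1 0 0.
Definition V4 := mkv ((d1+X5)/2 - s2/2*cos t2*Y5/d2) (Y5/2 + s2/2*cos t2*(X5-d1)/d2) (s2/2*sin t2).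
Definition V5 := mkv X5 Y5 0.
Definition V6 := mkv (X5/2 + s3/2*cos t3*Y5/d3) (Y5/2 - s3/2*cos t3*X5/d3) (s3/2*sin t3).

Ltac idt := cbv zeta; rewrite ?HD, ?E1, ?E2, ?E3; unfold V1, V2, V3, V4, V5, V6; vsimpl;
  field_simplify_eq; [cbn [pow]; nsatz' | repeat split; lra ..].

Lemma id_g2 : g2 d1 d2 d3 t1 t2 t3 = -4/(d1*s1) * ht V1 V2 V3 V6.
Proof. unfold g2; idt. Qed.
Lemma id_h3 : h3 d1 d2 d3 t1 t2 t3 = -4/(d1*s1) * ht V1 V2 V3 V4.
Proof. unfold h3; idt. Qed.
Lemma id_g3 : g3 d1 d2 d3 t1 t2 t3 = -4/(d2*s2) * ht V3 V4 V5 V2.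
Proof. unfold g3; idt. Qed.
Lemma id_h1 : h1 d1 d2 d3 t1 t2 t3 = -4/(d2*s2) * ht V3 V4 V5 V6.
Proof. unfold h1; idt. Qed.
Lemma id_g1 : g1 d1 d2 d3 t1 t2 t3 = -4/(d3*s3) * ht V5 V6 V1 V4.
Proof. unfold g1; idt. Qed.
Lemma id_h2 : h2 d1 d2 d3 t1 t2 t3 = -4/(d3*s3) * ht V5 V6 V1 V2.
Proof. unfold h2; idt. Qed.
Lemma id_f1 : f1 d1 d2 d3 t1 t2 t3 = 8*d2*d3 * det3 (vsub V1 V6) (vsub V3 V6) (vsub V4 V6).
Proof. unfold f1; idt. Qed.
Lemma id_f2 : f2 d1 d2 d3 t1 t2 t3 = 8*d1*d3 * det3 (vsub V3 V2) (vsub V5 V2) (vsub V6 V2).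
Proof. unfold f2; idt. Qed.
Lemma id_f3 : f3 d1 d2 d3 t1 t2 t3 = 8*d1*d2 * det3 (vsub V5 V4) (vsub V1 V4) (vsub V2 V4).
Proof. unfold f3; idt. Qed.
Ltac idt2 := unfold V1, V2, V3, V4, V5, V6; vsimpl;
  field_simplify_eq; [cbn [pow]; nsatz' | repeat split; lra ..].
Lemma id_b2 : ht V1 V2 V3 V5 = d1*s1/2*sin t1*Y5.
Proof. idt2. Qed.
Lemma id_b4 : ht V3 V4 V5 V1 = d1*s2/2*sin t2*Y5.
Proof. idt2. Qed.
Lemma id_b6 : ht V5 V6 V1 V3 = d1*s3/2*sin t3*Y5.
Proof. idt2. Qed.
End Ids.

Lemma ec_z a0 a1 a2 a b : edge_contrib a0 a1 a2 a b <> 0%Z ->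
  exists l al be ga, 0 <= l <= 1 /\ 0 < al /\ 0 < be /\ 0 < ga /\
    vz a + l * (vz b - vz a) = al * vz a0 + be * vz a1 + ga * vz a2.
Proof.
  intros Hne. destruct (ec_cross _ _ _ _ _ Hne) as [l [al [be [ga [Hl [Ha [Hb [Hg [_ He]]]]]]]]].
  exists l, al, be, ga. repeat split; auto; try lra.
  apply vec_comp in He. destruct He as [_ [_ He]]. revert He. dvec. vsimpl. intros ->. ring.
Qed.

Lemma ec_end_pos a0 a1 a2 a b : 0 < ht a0 a1 a2 b ->
  edge_contrib a0 a1 a2 a b = 0%Z \/ edge_contrib a0 a1 a2 a b = 1%Z.
Proof.
  intros Hb. destruct (ec_cases a0 a1 a2 a b) as [[E _]|[[E [_ [H2 _]]]|E]]; auto. lra.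
Qed.

Lemma ec_start_pos a0 a1 a2 a b : 0 < ht a0 a1 a2 a ->
  edge_contrib a0 a1 a2 a b = 0%Z \/ edge_contrib a0 a1 a2 a b = (-1)%Z.
Proof.
  intros Ha. destruct (ec_cases a0 a1 a2 a b) as [[E [H1 _]]|[[E _]|E]]; auto. lra.
Qed.

Lemma Rsign_1 x : Rsign x = 1%Z -> 0 < x.
Proof.
  unfold Rsign. destruct (Rlt_dec 0 x); auto. destruct (Rlt_dec x 0); discriminate.
Qed.

Lemma vert_eqs (H : hexagon) : Defs.vert H 1 = hv1 H /\ Defs.vert H 2 = hv2 H /\ Defs.vert H 3 = hv3 H /\ Defs.vert H 4 = hv4 H /\
  Defs.vert H 5 = hv5 H /\ Defs.vert H 6 = hv6 H /\ Defs.vert H 7 = hv1 H.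
Proof. repeat split; reflexivity. Qed.

Lemma Delta_2 (H : hexagon) : Defs.Delta H 2 = (edge_contrib (hv1 H) (hv2 H) (hv3 H) (hv4 H) (hv5 H) +
                               edge_contrib (hv1 H) (hv2 H) (hv3 H) (hv5 H) (hv6 H))%Z.
Proof.
  destruct (vert_eqs H) as [e1 [e2 [e3 [e4 [e5 [e6 e7]]]]]].
  unfold Defs.Delta; cbn [Nat.pred]. rewrite e1, e2, e3, e4, e5, e6, e7.
  rewrite (ec_start_vertex _ _ _ (hv1 H)) by (left; reflexivity).
  rewrite (ec_start_vertex _ _ _ (hv2 H)) by (right; left; reflexivity).
  rewrite (ec_start_vertex _ _ _ (hv3 H)) by (right; right; reflexivity).
  rewrite (ec_end_vertex _ _ _ (hv6 H) (hv1 H)) by (left; reflexivity).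
  ring.
Qed.

Lemma Delta_4 (H : hexagon) : Defs.Delta H 4 = (edge_contrib (hv3 H) (hv4 H) (hv5 H) (hv1 H) (hv2 H) +
                               edge_contrib (hv3 H) (hv4 H) (hv5 H) (hv6 H) (hv1 H))%Z.
Proof.
  destruct (vert_eqs H) as [e1 [e2 [e3 [e4 [e5 [e6 e7]]]]]].
  unfold Defs.Delta; cbn [Nat.pred]. rewrite e1, e2, e3, e4, e5, e6, e7.
  rewrite (ec_end_vertex _ _ _ (hv2 H) (hv3 H)) by (left; reflexivity).
  rewrite (ec_start_vertex _ _ _ (hv3 H)) by (left; reflexivity).
  rewrite (ec_start_vertex _ _ _ (hv4 H)) by (right; left; reflexivity).
  rewrite (ec_start_vertex _ _ _ (hv5 H)) by (right; right; reflexivity).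
  ring.
Qed.

Lemma Delta_6 (H : hexagon) : Defs.Delta H 6 = (edge_contrib (hv5 H) (hv6 H) (hv1 H) (hv2 H) (hv3 H) +
                               edge_contrib (hv5 H) (hv6 H) (hv1 H) (hv3 H) (hv4 H))%Z.
Proof.
  destruct (vert_eqs H) as [e1 [e2 [e3 [e4 [e5 [e6 e7]]]]]].
  unfold Defs.Delta; cbn [Nat.pred]. rewrite e1, e2, e3, e4, e5, e6, e7.
  rewrite (ec_start_vertex _ _ _ (hv1 H)) by (right; right; reflexivity).
  rewrite (ec_end_vertex _ _ _ (hv4 H) (hv5 H)) by (left; reflexivity).
  rewrite (ec_start_vertex _ _ _ (hv5 H)) by (left; reflexivity).
  rewrite (ec_start_vertex _ _ _ (hv6 H)) by (right; left; reflexivity).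
  ring.
Qed.

Lemma fneg k x : 0 < k -> x < 0 -> k * x < 0.
Proof. intros; nra. Qed.
Lemma gpos k x : 0 < 4 * k -> x < 0 -> -4 * k * x > 0.
Proof. intros; nra. Qed.

Theorem mainTheorem8 (H : hexagon) (t1 t2 t3 : R) :
  equilateral H -> embedded H -> standard_position H -> aa_defined H ->
  is_angles H t1 t2 t3 ->
  JCC H = ((-1)%Z, 1%Z) ->
  let d1 := dg1 H in let d2 := dg2 H in let d3 := dg3 H in
  f1 d1 d2 d3 t1 t2 t3 < 0 /\ f2 d1 d2 d3 t1 t2 t3 < 0 /\ f3 d1 d2 d3 t1 t2 t3 < 0 /\
  g1 d1 d2 d3 t1 t2 t3 > 0 /\ g2 d1 d2 d3 t1 t2 t3 > 0 /\ g3 d1 d2 d3 t1 t2 t3 > 0 /\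
  h1 d1 d2 d3 t1 t2 t3 > 0 /\ h2 d1 d2 d3 t1 t2 t3 > 0 /\ h3 d1 d2 d3 t1 t2 t3 > 0.
Proof.
  intros Heq Hemb Hstd Haa Hang HJ. cbv zeta.
  pose proof (coords H t1 t2 t3 Hstd Haa Hang) as C. cbv zeta in C.
  set (d1 := dg1 H) in *. set (d2 := dg2 H) in *. set (d3 := dg3 H) in *.
  set (s1 := sqrt (4 - d1^2)) in *. set (s2 := sqrt (4 - d2^2)) in *. set (s3 := sqrt (4 - d3^2)) in *.
  destruct C as [X5 [Y5 [E1 [E3 [E5 [[Hd1 Hd1'] [[Hd2 Hd2'] [[Hd3 Hd3'] [HY5 [D2s [D3s [HD
    [S1 [S2 [S3 [S1s [S2s [S3s [E2 [E4 E6]]]]]]]]]]]]]]]]]]]].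
  assert (Es1 : sqrt (4 - d1^2) = s1) by reflexivity.
  assert (Es2 : sqrt (4 - d2^2) = s2) by reflexivity.
  assert (Es3 : sqrt (4 - d3^2) = s3) by reflexivity.
  assert (T1 : cos t1 * cos t1 + sin t1 * sin t1 = 1) by (pose proof (sin2_cos2 t1); unfold Rsqr in *; lra).
  assert (T2 : cos t2 * cos t2 + sin t2 * sin t2 = 1) by (pose proof (sin2_cos2 t2); unfold Rsqr in *; lra).
  assert (T3 : cos t3 * cos t3 + sin t3 * sin t3 = 1) by (pose proof (sin2_cos2 t3); unfold Rsqr in *; lra).
  assert (EV1 : hv1 H = V1) by exact E1.
  assert (EV2 : hv2 H = V2 d1 s1 t1) by exact E2.
  assert (EV3 : hv3 H = V3 d1) by exact E3.
  assert (EV4 : hv4 H = V4 d1 d2 X5 Y5 s2 t2) by exact E4.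
  assert (EV5 : hv5 H = V5 X5 Y5) by exact E5.
  assert (EV6 : hv6 H = V6 d3 X5 Y5 s3 t3) by exact E6.
  clear E1 E2 E3 E4 E5 E6.
  assert (Z1 : vz (hv1 H) = 0) by (rewrite EV1; reflexivity).
  assert (Z2 : vz (hv2 H) = s1/2*sin t1) by (rewrite EV2; reflexivity).
  assert (Z3 : vz (hv3 H) = 0) by (rewrite EV3; reflexivity).
  assert (Z4 : vz (hv4 H) = s2/2*sin t2) by (rewrite EV4; reflexivity).
  assert (Z5 : vz (hv5 H) = 0) by (rewrite EV5; reflexivity).
  assert (Z6 : vz (hv6 H) = s3/2*sin t3) by (rewrite EV6; reflexivity).
  unfold JCC in HJ. cbv zeta in HJ. injection HJ as HJ1 HJ2.
  rewrite !Z.pow_pos_fold in HJ2. rewrite Delta_2, Delta_4, Delta_6 in HJ1, HJ2.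
  set (x2 := edge_contrib (hv1 H) (hv2 H) (hv3 H) (hv4 H) (hv5 H)) in *.
  set (y2 := edge_contrib (hv1 H) (hv2 H) (hv3 H) (hv5 H) (hv6 H)) in *.
  set (y4 := edge_contrib (hv3 H) (hv4 H) (hv5 H) (hv1 H) (hv2 H)) in *.
  set (x4 := edge_contrib (hv3 H) (hv4 H) (hv5 H) (hv6 H) (hv1 H)) in *.
  set (x6 := edge_contrib (hv5 H) (hv6 H) (hv1 H) (hv2 H) (hv3 H)) in *.
  set (y6 := edge_contrib (hv5 H) (hv6 H) (hv1 H) (hv3 H) (hv4 H)) in *.
  assert (Hc : curl H = 1%Z).
  { replace ((x2 + y2) ^ 2 * (y4 + x4) ^ 2 * (x6 + y6) ^ 2)%Z with
      (((x2 + y2) * (y4 + x4) * (x6 + y6)) ^ 2)%Z in HJ2 by ring.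
    rewrite HJ1 in HJ2. lia. }
  assert (N2 : (x2 + y2)%Z <> 0%Z) by (intros E; rewrite E in HJ1; lia).
  assert (N4 : (y4 + x4)%Z <> 0%Z) by (intros E; rewrite E in HJ1; lia).
  assert (N6 : (x6 + y6)%Z <> 0%Z) by (intros E; rewrite E in HJ1; lia).
  assert (Pn1 : 0 < sin t1).
  { unfold curl in Hc. apply Rsign_1 in Hc.
    assert (Ed : dot (cross (vsub (hv3 H) (hv1 H)) (vsub (hv5 H) (hv1 H))) (vsub (hv2 H) (hv1 H))
                 = d1*Y5*(s1/2*sin t1)).
    { rewrite EV1, EV2, EV3, EV5. unfold V1, V2, V3, V5. vsimpl. ring. }
    rewrite Ed in Hc. assert (0 < d1*Y5*(s1/2)) by (apply Rmult_lt_0_compat; [nra|lra]). nra. }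
  assert (Pz2 : 0 < s1/2*sin t1) by nra.
  assert (Hz4or6 : 0 < s2/2*sin t2 \/ 0 < s3/2*sin t3).
  { assert (Hxy : x2 <> 0%Z \/ y2 <> 0%Z) by lia.
    destruct Hxy as [Hx|Hy].
    - left. destruct (ec_z _ _ _ _ _ Hx) as [l [al [be [ga [Hl [Ha [Hb [Hg Hz]]]]]]]].
      rewrite Z1, Z2, Z3, Z4, Z5 in Hz. assert (0 < be * (s1/2*sin t1)) by (apply Rmult_lt_0_compat; lra).
      nra.
    - right. destruct (ec_z _ _ _ _ _ Hy) as [l [al [be [ga [Hl [Ha [Hb [Hg Hz]]]]]]]].
      rewrite Z1, Z2, Z3, Z5, Z6 in Hz. assert (0 < be * (s1/2*sin t1)) by (apply Rmult_lt_0_compat; lra).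
      nra. }
  assert (H46 : 0 < s2/2*sin t2 -> 0 < s3/2*sin t3).
  { intros P4. destruct (Rtotal_order (s3/2*sin t3) 0) as [Hn|[He|Hp]]; auto; exfalso.
    - assert (Hxy : x6 <> 0%Z \/ y6 <> 0%Z) by lia.
      destruct Hxy as [Hx|Hy].
      + destruct (ec_z _ _ _ _ _ Hx) as [l [al [be [ga [Hl [Ha [Hb [Hg Hz]]]]]]]].
        rewrite Z1, Z2, Z3, Z5, Z6 in Hz. assert (be * (s3/2*sin t3) < 0) by nra. nra.
      + destruct (ec_z _ _ _ _ _ Hy) as [l [al [be [ga [Hl [Ha [Hb [Hg Hz]]]]]]]].
        rewrite Z1, Z3, Z4, Z5, Z6 in Hz. assert (be * (s3/2*sin t3) < 0) by nra. nra.
    - apply N6. unfold x6, y6.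
      assert (Zf : vz (hv6 H) = 0) by (rewrite Z6; exact He).
      pose proof (ht_flat (hv5 H) (hv6 H) (hv1 H)) as F.
      apply flat_cancel.
      + rewrite F; auto. rewrite Z3; ring.
      + rewrite !F, Z2, Z4 by auto. set (N := vz _). split; intros; nra. }
  assert (H64 : 0 < s3/2*sin t3 -> 0 < s2/2*sin t2).
  { intros P6. destruct (Rtotal_order (s2/2*sin t2) 0) as [Hn|[He|Hp]]; auto; exfalso.
    - assert (Hxy : y4 <> 0%Z \/ x4 <> 0%Z) by lia.
      destruct Hxy as [Hy|Hx].
      + destruct (ec_z _ _ _ _ _ Hy) as [l [al [be [ga [Hl [Ha [Hb [Hg Hz]]]]]]]].
        rewrite Z1, Z2, Z3, Z4, Z5 in Hz. assert (be * (s2/2*sin t2) < 0) by nra. nra.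
      + destruct (ec_z _ _ _ _ _ Hx) as [l [al [be [ga [Hl [Ha [Hb [Hg Hz]]]]]]]].
        rewrite Z1, Z3, Z4, Z5, Z6 in Hz. assert (be * (s2/2*sin t2) < 0) by nra. nra.
    - apply N4. unfold x4, y4. rewrite Z.add_comm.
      assert (Zf : vz (hv4 H) = 0) by (rewrite Z4; exact He).
      pose proof (ht_flat (hv3 H) (hv4 H) (hv5 H)) as F.
      apply flat_cancel.
      + rewrite F; auto. rewrite Z1; ring.
      + rewrite !F, Z2, Z6 by auto. set (N := vz _). split; intros; nra. }
  assert (Pn2 : 0 < sin t2) by (destruct Hz4or6; [|apply H64 in H0]; nra).
  assert (Pn3 : 0 < sin t3) by (destruct Hz4or6; [apply H46 in H0|]; nra).
  assert (B2 : 0 < ht (hv1 H) (hv2 H) (hv3 H) (hv5 H)).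
  { rewrite EV1, EV2, EV3, EV5. rewrite (id_b2 d1 d2 d3 X5 Y5 s1 s2 s3 t1 t2 t3) by assumption.
    apply Rmult_lt_0_compat; [|lra]. apply Rmult_lt_0_compat; [|lra]. apply Rdiv_lt_0_compat; [nra|lra]. }
  assert (B4 : 0 < ht (hv3 H) (hv4 H) (hv5 H) (hv1 H)).
  { rewrite EV1, EV4, EV3, EV5. rewrite (id_b4 d1 d2 d3 X5 Y5 s1 s2 s3 t1 t2 t3) by assumption.
    apply Rmult_lt_0_compat; [|lra]. apply Rmult_lt_0_compat; [|lra]. apply Rdiv_lt_0_compat; [nra|lra]. }
  assert (B6 : 0 < ht (hv5 H) (hv6 H) (hv1 H) (hv3 H)).
  { rewrite EV1, EV6, EV3, EV5. rewrite (id_b6 d1 d2 d3 X5 Y5 s1 s2 s3 t1 t2 t3) by assumption.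
    apply Rmult_lt_0_compat; [|lra]. apply Rmult_lt_0_compat; [|lra]. apply Rdiv_lt_0_compat; [nra|lra]. }
  assert (Vx2 : x2 = 0%Z \/ x2 = 1%Z) by (apply ec_end_pos; exact B2).
  assert (Vy2 : y2 = 0%Z \/ y2 = (-1)%Z) by (apply ec_start_pos; exact B2).
  assert (Vx4 : x4 = 0%Z \/ x4 = 1%Z) by (apply ec_end_pos; exact B4).
  assert (Vy4 : y4 = 0%Z \/ y4 = (-1)%Z) by (apply ec_start_pos; exact B4).
  assert (Vx6 : x6 = 0%Z \/ x6 = 1%Z) by (apply ec_end_pos; exact B6).
  assert (Vy6 : y6 = 0%Z \/ y6 = (-1)%Z) by (apply ec_start_pos; exact B6).
  assert (M2 : y2 <> 0%Z -> x6 <> 0%Z -> False) by (apply Lmix).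
  assert (M4 : y4 <> 0%Z -> x2 <> 0%Z -> False) by (apply Lmix).
  assert (M6 : y6 <> 0%Z -> x4 <> 0%Z -> False) by (apply Lmix).
  assert (Hy : y2 = (-1)%Z /\ y4 = (-1)%Z /\ y6 = (-1)%Z).
  { clearbody x2 y2 x4 y4 x6 y6.
    destruct Vx2 as [-> | ->]; destruct Vy2 as [-> | ->]; destruct Vx4 as [-> | ->];
    destruct Vy4 as [-> | ->]; destruct Vx6 as [-> | ->]; destruct Vy6 as [-> | ->];
    simpl in HJ1; try discriminate; try lia. }
  destruct Hy as [Hy2 [Hy4 Hy6]].
  destruct (GL _ _ _ _ _ Hy2 B2 B6) as [G2a [G2b G2c]].
  assert (B2' : 0 < ht (hv1 H) (hv2 H) (hv3 H) (hv5 H)) by exact B2.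
  destruct (GL _ _ _ _ _ Hy4 B4 B2) as [G4a [G4b G4c]].
  destruct (GL _ _ _ _ _ Hy6 B6 B4) as [G6a [G6b G6c]].
  rewrite (id_f1 d1 d2 d3 X5 Y5 s1 s2 s3 t1 t2 t3) by assumption.
  rewrite (id_f2 d1 d2 d3 X5 Y5 s1 s2 s3 t1 t2 t3) by assumption.
  rewrite (id_f3 d1 d2 d3 X5 Y5 s1 s2 s3 t1 t2 t3) by assumption.
  rewrite (id_g1 d1 d2 d3 X5 Y5 s1 s2 s3 t1 t2 t3) by assumption.
  rewrite (id_g2 d1 d2 d3 X5 Y5 s1 s2 s3 t1 t2 t3) by assumption.
  rewrite (id_g3 d1 d2 d3 X5 Y5 s1 s2 s3 t1 t2 t3) by assumption.
  rewrite (id_h1 d1 d2 d3 X5 Y5 s1 s2 s3 t1 t2 t3) by assumption.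
  rewrite (id_h2 d1 d2 d3 X5 Y5 s1 s2 s3 t1 t2 t3) by assumption.
  rewrite (id_h3 d1 d2 d3 X5 Y5 s1 s2 s3 t1 t2 t3) by assumption.
  assert (K1 : 0 < 4/(d1*s1)) by (apply Rdiv_lt_0_compat; [lra|nra]).
  assert (K2 : 0 < 4/(d2*s2)) by (apply Rdiv_lt_0_compat; [lra|nra]).
  assert (K3 : 0 < 4/(d3*s3)) by (apply Rdiv_lt_0_compat; [lra|nra]).
  assert (K12 : 0 < 8*d1*d2) by nra. assert (K13 : 0 < 8*d1*d3) by nra. assert (K23 : 0 < 8*d2*d3) by nra.
  rewrite <- EV1, <- EV2, <- EV3, <- EV4, <- EV5, <- EV6.
  unfold Rdiv in *.
  repeat split.
  - apply fneg; auto.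
  - apply fneg; auto.
  - apply fneg; auto.
  - apply gpos; auto.
  - apply gpos; auto.
  - apply gpos; auto.
  - apply gpos; auto.
  - apply gpos; auto.
  - apply gpos; auto.
Qed.
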